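(* Let $\eta,\delta,M$ be integers greater than $1$ and let $f$ be a positive integer, with $\gcd(\eta,\delta)=1$ (so that $\mu=\eta/\delta$ is an irreducible fraction). Suppose that $$(\delta f)^{2}-M(\eta+\delta)^{2}=\delta^{2}\,\frac{M+1}{3},$$ equivalently $M=\dfrac{\delta^{2}(3f^{2}-1)}{3(\eta+\delta)^{2}+\delta^{2}}$, and suppose moreover that $M$ is a number of terms for which a sum of $M$ consecutive squares can be a perfect square, i.e. there is an integer $a\geq 1$ such that $\sum_{i=0}^{M-1}(a+i)^{2}$ is a perfect square. Then $\eta\equiv 1 \pmod 2$ and $\delta\equiv 0,1$ or $5 \pmod 6$; furthermore, if $\delta\equiv 0\pmod 6$ then $M\equiv 0\pmod{12}$, and if $\delta\equiv 1$ or $5\pmod 6$ then $M\equiv 2 \pmod{12}$ when $f$ is odd and $M\equiv 11\pmod{12}$ when $f$ is even. More precisely, $(\delta,\eta,f,M)$ satisfy one of the following: (a) $\delta\equiv 0\pmod{36}$, $\eta\equiv 1$ or $5\pmod 6$, $f$ arbitrary, $M\equiv 0\pmod{144}$; (b) $\delta\equiv 12$ or $24\pmod{36}$, $\eta\equiv 1$ or $5\pmod 6$, $f$ arbitrary, $M\equiv 96\pmod{144}$; (c) $\delta\equiv 6$ or $30\pmod{36}$, $\eta\equiv 1$ or $5\pmod 6$, $f\equiv 1\pmod 2$, $M\equiv 24\pmod{144}$; (d) $\delta\equiv 18\pmod{36}$, $\eta\equiv 1$ or $5\pmod 6$, $f\equiv 1\pmod 2$, $M\equiv 72\pmod{144}$;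 (e) $\delta\equiv 1\pmod 6$: if $f\equiv 1$ or $5\pmod 6$, then $M\equiv 50\pmod{72}$ when $\eta\equiv 1$ or $3\pmod 6$, and $M\equiv 2\pmod{72}$ when $\eta\equiv 5\pmod 6$; if $f\equiv 3\pmod 6$, then $M\equiv 2\pmod{72}$ when $\eta\equiv 1$ or $3\pmod 6$, and $M\equiv 26\pmod{72}$ when $\eta\equiv 5\pmod 6$; if $f\equiv 0\pmod 6$, then $M\equiv 11\pmod{36}$ when $\eta\equiv 1$ or $3\pmod 6$, and $M\equiv 35\pmod{36}$ when $\eta\equiv 5\pmod 6$; if $f\equiv 2$ or $4\pmod 6$, then $M\equiv 23\pmod{36}$ when $\eta\equiv 1$ or $3\pmod 6$, and $M\equiv 11\pmod{36}$ when $\eta\equiv 5\pmod 6$; (f) $\delta\equiv 5\pmod 6$: if $f\equiv 1$ or $5\pmod 6$, then $M\equiv 2\pmod{72}$ when $\eta\equiv 1\pmod 6$, and $M\equiv 50\pmod{72}$ when $\eta\equiv 3$ or $5\pmod 6$; if $f\equiv 3\pmod 6$, then $M\equiv 26\pmod{72}$ when $\eta\equiv 1\pmod 6$, and $M\equiv 2\pmod{72}$ when $\eta\equiv 3$ or $5\pmod 6$; if $f\equiv 0\pmod 6$, then $M\equiv 35\pmod{36}$ when $\eta\equiv 1\pmod 6$, and $M\equiv 11\pmod{36}$ when $\eta\equiv 3$ or $5\pmod 6$; if $f\equiv 2$ or $4\pmod 6$, then $M\equiv 11\pmod{36}$ when $\eta\equiv 1\pmod 6$, and $M\equiv 23\pmod{36}$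 when $\eta\equiv 3$ or $5\pmod 6$.
   Context: Setting: for $\mu=\eta/\delta$, two positive integers $a_1,a_2$ with $a_1+a_2=\mu M+1$ and $a_2-a_1=f$ form a ''pair'' for the number of terms $M$; when $M=\delta^2(3f^2-1)/(3(\eta+\delta)^2+\delta^2)$ the sums $\sum_{i=0}^{M-1}(a_j+i)^2$ ($j=1,2$) are perfect squares. It is known from earlier work (cited, not proved in this paper) that a sum of $M>1$ consecutive squares $\sum_{i=0}^{M-1}(a+i)^2$ with $a\ge 1$ can be a perfect square only if $M\equiv 0$ or $24\pmod{72}$, or $M\equiv 1,2$ or $16\pmod{24}$, or $M\equiv 9$ or $33\pmod{72}$, or $M\equiv 11\pmod{12}$; in particular $M\equiv 0,1,2,4,9$ or $11\pmod{12}$. *)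

(* Defs.v *)
From mathcomp Require Import all_boot.
Set Implicit Arguments. Unset Strict Implicit. Unset Printing Implicit Defensive.

Definition consec_sq_square (M : nat) : Prop :=
  exists a s : nat, 1 <= a /\ \sum_(i < M) (a + i) ^ 2 = s ^ 2.

(* Main.v *)
Require Import Defs.
From mathcomp Require Import all_boot all_order all_algebra ring.
From mathcomp Require Import zify.
Import GRing.Theory.


Lemma enum4 n (P : nat -> nat -> nat -> nat -> bool) :
  all (fun a => all (fun b => all (fun c => all (fun d => P a b c d) (iota 0 n)) (iota 0 n)) (iota 0 n)) (iota 0 n) ->
  forall a b c d, a < n -> b < n -> c < n -> d < n -> P a b c d.
Proof.
move=> H a b c d ha hb hc hd.
have mi x : x < n -> x \in iota 0 n by rewrite mem_iota.
by move/allP/(_ a (mi _ ha))/allP/(_ b (mi _ hb))/allP/(_ c (mi _ hc))/allP/(_ d (mi _ hd)): H.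
Qed.

Lemma enum2 n (P : nat -> nat -> bool) :
  all (fun a => all (fun b => P a b) (iota 0 n)) (iota 0 n) ->
  forall a b, a < n -> b < n -> P a b.
Proof.
move=> H a b ha hb.
have mi x : x < n -> x \in iota 0 n by rewrite mem_iota.
by move/allP/(_ a (mi _ ha))/allP/(_ b (mi _ hb)): H.
Qed.

Section Checks.
Local Open Scope ring_scope.

Definition eqD (n : nat) (e d f m : nat) : bool :=
  (m%:R * (3%:R * (e%:R + d%:R) ^+ 2 + d%:R ^+ 2) + d%:R ^+ 2
    == 3%:R * d%:R ^+ 2 * f%:R ^+ 2 :> 'Z_n).

Definition eqU12 (n : nat) (e k f m : nat) : bool :=
  (m%:R * ((e%:R + 6%:R * k%:R) ^+ 2 + 12%:R * k%:R ^+ 2) + 12%:R * k%:R ^+ 2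
    == 36%:R * k%:R ^+ 2 * f%:R ^+ 2 :> 'Z_n).

Definition eqU1 (n : nat) (e k f m : nat) : bool :=
  (m%:R * ((e%:R + 6%:R * k%:R) ^+ 2 + 12%:R * k%:R ^+ 2) + k%:R ^+ 2
    == 3%:R * k%:R ^+ 2 * f%:R ^+ 2 :> 'Z_n).

Definition P4a e d f m : bool :=
  ((e %% 2 == 0) && (d %% 2 == 1))%N ==> ~~ eqD 4 e d f m.
Definition P4A e d : bool :=
  ((e %% 2 == 1) && (d %% 2 == 0))%N ==>
  (3%:R * (e%:R + d%:R) ^+ 2 + d%:R ^+ 2 == 3%:R :> 'Z_4).
Definition P4B e d : bool :=
  ((e %% 2 == 1) && (d %% 2 == 1))%N ==>
  ((e%:R + 3%:R * d%:R) ^+ 2 + 3%:R * d%:R ^+ 2 == 3%:R :> 'Z_4).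
Definition P3A e d : bool :=
  (d %% 3 != 0)%N ==> (3%:R * (e%:R + d%:R) ^+ 2 + d%:R ^+ 2 != 0 :> 'Z_3).
Definition P3B e d : bool :=
  (e %% 3 != 0)%N ==> ((e%:R + 3%:R * d%:R) ^+ 2 + 3%:R * d%:R ^+ 2 != 0 :> 'Z_3).
Definition P8 e d f m : bool :=
  ((e %% 2 == 1) && (d %% 2 == 1))%N ==> eqD 8 e d f m ==>
  (if (f %% 2 == 1)%N then (m == 2)%N else (m %% 4 == 3)%N).
Definition g9 e d f : nat :=
  if (f %% 3 == 0)%N then (if ((e + d) %% 3 == 0)%N then 8 else 2)%N
  else (if ((e + d) %% 3 == 0)%N then 2 else 5)%N.
Definition P9 e d f m : bool :=
  (d %% 3 != 0)%N ==> eqD 9 e d f m ==> (m == g9 e d f)%N.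
Definition P12 e k f m : bool :=
  ((e %% 2 == 1) && (e %% 3 != 0))%N ==> eqU12 12 e k f m ==> (m == 0)%N.
Definition P12u e k : bool :=
  ((e %% 2 == 1) && (e %% 3 != 0))%N ==>
  ((e%:R + 6%:R * k%:R) ^+ 2 + 12%:R * k%:R ^+ 2 == 1 :> 'Z_12).
Definition P4c e k f m : bool :=
  (e %% 2 == 1)%N ==> eqU1 4 e k f m ==>
  (if (k %% 2 == 0)%N then (m == 0)%N else if (f %% 2 == 1)%N then (m == 2)%N else (m %% 2 == 1)%N).
Definition P9c e k f m : bool :=
  (e %% 3 != 0)%N ==> eqU1 9 e k f m ==>
  (if (k %% 3 == 0)%N then (m == 0)%N else (m %% 3 == 2)%N).

End Checks.

Lemma c4a : forall a b c d, a < 4 -> b < 4 -> c < 4 -> d < 4 -> P4a a b c d.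
Proof. apply: enum4. vm_compute. reflexivity. Qed.
Lemma c4A : forall a b, a < 4 -> b < 4 -> P4A a b.
Proof. apply: enum2. vm_compute. reflexivity. Qed.
Lemma c4B : forall a b, a < 4 -> b < 4 -> P4B a b.
Proof. apply: enum2. vm_compute. reflexivity. Qed.
Lemma c3A : forall a b, a < 3 -> b < 3 -> P3A a b.
Proof. apply: enum2. vm_compute. reflexivity. Qed.
Lemma c3B : forall a b, a < 3 -> b < 3 -> P3B a b.
Proof. apply: enum2. vm_compute. reflexivity. Qed.
Lemma c8 : forall a b c d, a < 8 -> b < 8 -> c < 8 -> d < 8 -> P8 a b c d.
Proof. apply: enum4. vm_compute. reflexivity. Qed.
Lemma c9 : forall a b c d, a < 9 -> b < 9 -> c < 9 -> d < 9 -> P9 a b c d.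
Proof. apply: enum4. vm_compute. reflexivity. Qed.
Lemma c12u : forall a b, a < 12 -> b < 12 -> P12u a b.
Proof. apply: enum2. vm_compute. reflexivity. Qed.
Lemma c4c : forall a b c d, a < 4 -> b < 4 -> c < 4 -> d < 4 -> P4c a b c d.
Proof. apply: enum4. vm_compute. reflexivity. Qed.
Lemma c9c : forall a b c d, a < 9 -> b < 9 -> c < 9 -> d < 9 -> P9c a b c d.
Proof. apply: enum4. vm_compute. reflexivity. Qed.


Lemma eqD_nat n e d f m : m * (3*(e+d)^2 + d^2) + d^2 = 3*d^2*f^2 -> eqD n e d f m.
Proof. move=> H; apply/eqP.
have E1 : ((m * (3*(e+d)^2 + d^2) + d^2)%:R : 'Z_n)%R = (m%:R * (3%:R * (e%:R + d%:R) ^+ 2 + d%:R ^+ 2) + d%:R ^+ 2)%R by ring.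
have E2 : ((3*d^2*f^2)%:R : 'Z_n)%R = (3%:R * d%:R ^+ 2 * f%:R ^+ 2)%R by ring.
by rewrite -E1 -E2 H.
Qed.
Lemma eqU12_nat n e k f m : m * ((e + 6*k)^2 + 12*k^2) + 12*k^2 = 36*k^2*f^2 -> eqU12 n e k f m.
Proof. move=> H; apply/eqP.
have E1 : ((m * ((e + 6*k)^2 + 12*k^2) + 12*k^2)%:R : 'Z_n)%R = (m%:R * ((e%:R + 6%:R * k%:R) ^+ 2 + 12%:R * k%:R ^+ 2) + 12%:R * k%:R ^+ 2)%R by ring.
have E2 : ((36*k^2*f^2)%:R : 'Z_n)%R = (36%:R * k%:R ^+ 2 * f%:R ^+ 2)%R by ring.
by rewrite -E1 -E2 H.
Qed.
Lemma eqU1_nat n e k f m : m * ((e + 6*k)^2 + 12*k^2) + k^2 = 3*k^2*f^2 -> eqU1 n e k f m.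
Proof. move=> H; apply/eqP.
have E1 : ((m * ((e + 6*k)^2 + 12*k^2) + k^2)%:R : 'Z_n)%R = (m%:R * ((e%:R + 6%:R * k%:R) ^+ 2 + 12%:R * k%:R ^+ 2) + k%:R ^+ 2)%R by ring.
have E2 : ((3*k^2*f^2)%:R : 'Z_n)%R = (3%:R * k%:R ^+ 2 * f%:R ^+ 2)%R by ring.
by rewrite -E1 -E2 H.
Qed.

Lemma mlt {n} x : 0 < n -> x %% n < n. Proof. exact: ltn_pmod. Qed.

Lemma to4a e d f m : m * (3*(e+d)^2 + d^2) + d^2 = 3*d^2*f^2 -> e %% 2 = 0 -> d %% 2 = 1 -> False.
Proof.
move=> H he hd; have := c4a _ _ _ _ (mlt e (isT : 0 < 4)) (mlt d (isT : 0 < 4)) (mlt f (isT : 0 < 4)) (mlt m (isT : 0 < 4)).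
rewrite /P4a /eqD !Zp_nat_mod //.
have -> : e %% 4 %% 2 = 0 by lia. have -> : d %% 4 %% 2 = 1 by lia.
by have := eqD_nat 4 _ _ _ _ H; rewrite /eqD => ->.
Qed.

Lemma to4A e d : e %% 2 = 1 -> d %% 2 = 0 -> (3*(e+d)^2 + d^2) %% 4 = 3.
Proof.
move=> he hd; have := c4A _ _ (mlt e (isT : 0 < 4)) (mlt d (isT : 0 < 4)).
rewrite /P4A !Zp_nat_mod //.
have -> : e %% 4 %% 2 = 1 by lia. have -> : d %% 4 %% 2 = 0 by lia.
have E : (((3*(e+d)^2 + d^2)%:R : 'Z_4) = 3%:R * (e%:R + d%:R) ^+ 2 + d%:R ^+ 2)%R by ring.
rewrite -E /= => /eqP /(congr1 val).
by rewrite /= !val_Zp_nat.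
Qed.

Lemma to4B e d : e %% 2 = 1 -> d %% 2 = 1 -> ((e + 3*d)^2 + 3*d^2) %% 4 = 3.
Proof.
move=> he hd; have := c4B _ _ (mlt e (isT : 0 < 4)) (mlt d (isT : 0 < 4)).
rewrite /P4B !Zp_nat_mod //.
have -> : e %% 4 %% 2 = 1 by lia. have -> : d %% 4 %% 2 = 1 by lia.
have E : ((((e + 3*d)^2 + 3*d^2)%:R : 'Z_4) = (e%:R + 3%:R * d%:R) ^+ 2 + 3%:R * d%:R ^+ 2)%R by ring.
rewrite -E /= => /eqP /(congr1 val).
by rewrite /= !val_Zp_nat.
Qed.

Lemma to3A e d : d %% 3 != 0 -> ~~ (3 %| 3*(e+d)^2 + d^2).
Proof.
move=> hd; have := c3A _ _ (mlt e (isT : 0 < 3)) (mlt d (isT : 0 < 3)).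
rewrite /P3A !Zp_nat_mod // modn_mod hd /=.
have E : (((3*(e+d)^2 + d^2)%:R : 'Z_3) = 3%:R * (e%:R + d%:R) ^+ 2 + d%:R ^+ 2)%R by ring.
rewrite -E.
apply: contra => h; apply/eqP/val_inj; rewrite /= val_Zp_nat //; exact/eqP.
Qed.

Lemma to3B e d : e %% 3 != 0 -> ~~ (3 %| (e + 3*d)^2 + 3*d^2).
Proof.
move=> he; have := c3B _ _ (mlt e (isT : 0 < 3)) (mlt d (isT : 0 < 3)).
rewrite /P3B !Zp_nat_mod // modn_mod he /=.
have E : ((((e + 3*d)^2 + 3*d^2)%:R : 'Z_3) = (e%:R + 3%:R * d%:R) ^+ 2 + 3%:R * d%:R ^+ 2)%R by ring.
rewrite -E.
apply: contra => h; apply/eqP/val_inj; rewrite /= val_Zp_nat //; exact/eqP.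
Qed.

Lemma to8 e d f m : m * (3*(e+d)^2 + d^2) + d^2 = 3*d^2*f^2 -> e %% 2 = 1 -> d %% 2 = 1 ->
  (f %% 2 = 1 -> m %% 8 = 2) /\ (f %% 2 = 0 -> m %% 4 = 3).
Proof.
move=> H he hd; have := c8 _ _ _ _ (mlt e (isT : 0 < 8)) (mlt d (isT : 0 < 8)) (mlt f (isT : 0 < 8)) (mlt m (isT : 0 < 8)).
rewrite /P8 /eqD !Zp_nat_mod //.
have -> : e %% 8 %% 2 = 1 by lia. have -> : d %% 8 %% 2 = 1 by lia.
have -> : f %% 8 %% 2 = f %% 2 by lia. have -> : m %% 8 %% 4 = m %% 4 by lia.
have := eqD_nat 8 _ _ _ _ H; rewrite /eqD => -> /=.
by case: ifP => /eqP h1 /eqP h2; split => h3; lia.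
Qed.

Lemma to9 e d f m : m * (3*(e+d)^2 + d^2) + d^2 = 3*d^2*f^2 -> d %% 3 != 0 ->
  m %% 9 = g9 e d f.
Proof.
move=> H hd; have := c9 _ _ _ _ (mlt e (isT : 0 < 9)) (mlt d (isT : 0 < 9)) (mlt f (isT : 0 < 9)) (mlt m (isT : 0 < 9)).
rewrite /P9 /eqD !Zp_nat_mod //.
have -> : d %% 9 %% 3 = d %% 3 by lia. rewrite hd /=.
have := eqD_nat 9 _ _ _ _ H; rewrite /eqD => -> /= /eqP ->.
rewrite /g9.
have -> : f %% 9 %% 3 = f %% 3 by lia. have -> : (e %% 9 + d %% 9) %% 3 = (e + d) %% 3 by lia.
by [].
Qed.

Lemma to12 e k f m : m * ((e + 6*k)^2 + 12*k^2) + 12*k^2 = 36*k^2*f^2 -> e %% 2 = 1 -> e %% 3 != 0 ->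
  m %% 12 = 0.
Proof.
move=> H he1 he2.
have hu : ((e + 6*k)^2 + 12*k^2) %% 12 = 1.
  have := c12u _ _ (mlt e (isT : 0 < 12)) (mlt k (isT : 0 < 12)).
  rewrite /P12u !Zp_nat_mod //.
  have -> : e %% 12 %% 2 = 1 by lia. have -> : e %% 12 %% 3 = e %% 3 by lia. rewrite he2 /=.
  have E : ((((e + 6*k)^2 + 12*k^2)%:R : 'Z_12) = (e%:R + 6%:R * k%:R) ^+ 2 + 12%:R * k%:R ^+ 2)%R by ring.
  rewrite -E /= => /eqP /(congr1 val).
  by rewrite /= !val_Zp_nat.
set u := (e + 6*k)^2 + 12*k^2 in H hu *.
have d12 : 12 %| m * u by rewrite /dvdn; apply/eqP; lia.
rewrite Gauss_dvdl in d12; last by rewrite -coprime_modr hu.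
by move/eqP: d12.
Qed.

Lemma to4c e k f m : m * ((e + 6*k)^2 + 12*k^2) + k^2 = 3*k^2*f^2 -> e %% 2 = 1 ->
  [/\ k %% 2 = 0 -> m %% 4 = 0, k %% 2 = 1 -> f %% 2 = 1 -> m %% 4 = 2 &
      k %% 2 = 1 -> f %% 2 = 0 -> m %% 2 = 1].
Proof.
move=> H he; have := c4c _ _ _ _ (mlt e (isT : 0 < 4)) (mlt k (isT : 0 < 4)) (mlt f (isT : 0 < 4)) (mlt m (isT : 0 < 4)).
rewrite /P4c /eqU1 !Zp_nat_mod //.
have -> : e %% 4 %% 2 = 1 by lia.
have -> : k %% 4 %% 2 = k %% 2 by lia. have -> : f %% 4 %% 2 = f %% 2 by lia.
have -> : m %% 4 %% 2 = m %% 2 by lia.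
have := eqU1_nat 4 _ _ _ _ H; rewrite /eqU1 => -> /=.
case: ifP => /eqP h1; [|case: ifP => /eqP h2] => /eqP h3; split; lia.
Qed.

Lemma to9c e k f m : m * ((e + 6*k)^2 + 12*k^2) + k^2 = 3*k^2*f^2 -> e %% 3 != 0 ->
  (k %% 3 = 0 -> m %% 9 = 0) /\ (k %% 3 <> 0 -> m %% 3 = 2).
Proof.
move=> H he; have := c9c _ _ _ _ (mlt e (isT : 0 < 9)) (mlt k (isT : 0 < 9)) (mlt f (isT : 0 < 9)) (mlt m (isT : 0 < 9)).
rewrite /P9c /eqU1 !Zp_nat_mod //.
have -> : e %% 9 %% 3 = e %% 3 by lia. rewrite he /=.
have -> : k %% 9 %% 3 = k %% 3 by lia. have -> : m %% 9 %% 3 = m %% 3 by lia.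
have := eqU1_nat 9 _ _ _ _ H; rewrite /eqU1 => -> /=.
case: ifP => /eqP h1 /eqP h3; split; lia.
Qed.




Lemma prod1mod4 n : 0 < n -> (forall p, prime p -> p %| n -> p %% 4 = 1) -> n %% 4 = 1.
Proof.
elim: n {-2}n (leqnn n) => [|N IH] n hn n0 H; first lia.
case: (ltnP 1 n) => [n1|n1]; last by have -> : n = 1 by lia.
have pp := pdiv_prime n1; have pd := pdiv_dvd n.
set p := pdiv n in pp pd *.
have hp := H p pp pd.
have p1 := prime_gt1 pp.
have lt : n %/ p < n by apply: ltn_Pdiv.
have q0 : 0 < n %/ p by rewrite divn_gt0 ?(prime_gt0 pp) // dvdn_leq.
rewrite -(divnK pd) -modnMm hp muln1 modn_mod IH //; first lia.
move=> r pr rd; apply: H => //; apply: dvdn_trans rd _.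
by rewrite -{2}(divnK pd) dvdn_mulr.
Qed.

Section S.
Local Open Scope ring_scope.
Lemma sum2sq q z w : prime q -> (q %| z^2 + w^2)%N -> ~~ (q %| w)%N -> (q %% 4 != 3)%N.
Proof.
move=> pq hd hw; apply/eqP => h3.
have chq := pchar_Fp pq.
pose x : 'F_q := (z%:R / w%:R).
have w0 : (w%:R : 'F_q) != 0 by rewrite -(dvdn_pcharf chq).
have zw : ((z%:R : 'F_q) ^+ 2 + (w%:R : 'F_q) ^+ 2 = 0).
  by apply/eqP; rewrite -natrX -natrX -natrD -(dvdn_pcharf chq).
have x2 : (x ^+ 2 = -1).
  rewrite /x expr_div_n; apply: (canLR (mulfK _)); first by rewrite expf_neq0.
  by rewrite mulN1r; apply/eqP; rewrite -addr_eq0 zw.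
have [k hk] : exists k, q = ((2 * k + 1) * 2 + 1)%N by exists (q %/ 4)%N; lia.
have hc : x ^+ ((2 * k + 1) * 2 + 1) = x.
  rewrite -hk /x exprMn exprVn -!natrX -(Fp_nat_mod pq (z ^ q)) -(Fp_nat_mod pq (w ^ q)).
  by rewrite !fermat_little // !Fp_nat_mod.
move: hc; rewrite addn1 exprS (mulnC _ 2) exprM x2 -signr_odd.
have -> : odd (2 * k + 1) = true by rewrite oddD oddM.
rewrite expr1 mulrN1 => /eqP; rewrite eq_sym -subr_eq0 opprK -mulr2n -mulr_natr mulf_eq0.
have -> : ((2%:R : 'F_q) == 0) = false.
  rewrite -(dvdn_pcharf chq); apply/negP => /dvdn_leq; rewrite hk; lia.
rewrite orbF => /eqP x0.
have : (x ^+ 2 = 0) by rewrite x0 expr0n.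
by rewrite x2 => /eqP; rewrite oppr_eq0 oner_eq0.
Qed.
End S.

Lemma no_u u : 0 < u -> u %% 4 = 3 ->
  (forall q, prime q -> q %| u -> exists z w, q %| z^2 + w^2 /\ ~~ (q %| w)) -> False.
Proof.
move=> u0 u3 H.
suff : u %% 4 = 1 by lia.
apply: prod1mod4 => // q pq qu.
have [z [w [h1 h2]]] := H q pq qu.
have := sum2sq _ _ _ pq h1 h2.
have : q %% 2 = 1.
  case: (boolP (2 %| q)) => [h2q|]; last by rewrite /dvdn; lia.
  have : 2 %| u by apply: dvdn_trans qu.
  rewrite /dvdn => /eqP; lia.
lia.
Qed.

Lemma cop_no p a b : prime p -> coprime a b -> p %| a -> p %| b -> False.
Proof.
move=> pp co pa pb.
have : p %| gcdn a b by rewrite dvdn_gcd pa.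
rewrite (eqP co) dvdn1 => /eqP p1; move: (prime_gt1 pp); lia.
Qed.


Lemma sum_sq a n : 6 * \sum_(i < n.+1) (a + i)^2 = n.+1 * n * (2*n+1) + 6*a*n.+1*n + 6*a^2*n.+1.
Proof.
elim: n => [|n IH]; first by rewrite big_ord1 /=; lia.
rewrite big_ord_recr /= mulnDr IH. nia.
Qed.

Lemma consec_not4 M : 1 < M -> consec_sq_square M -> M %% 8 <> 4.
Proof.
move=> hM [a [s [_ H]]] h4.
have [k hk] : exists k, M = 8 * k + 4 by exists (M %/ 8); lia.
subst M.
have := sum_sq a (8*k+3). rewrite -(addn1 (8*k+3)) -addnA /= H.
have [r [->|->]] : exists r, s = 2 * r \/ s = 2 * r + 1 by exists (s %/ 2); lia.
all: lia.
Qed.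

Lemma oddE n : odd n = (n %% 2 == 1).
Proof. by rewrite modn2; case: (odd n). Qed.

Lemma prime3 q : prime q -> q %| 3 -> q = 3.
Proof.
move=> pq hq; case/primeP: (isT : prime 3) => _ /(_ q hq) /orP[/eqP q1|/eqP //].
by move: (prime_gt1 pq); rewrite q1.
Qed.

Lemma idA f W X dl : 3*f^2 = W+1 ->
  (W + 1) * (3 * X^2 + dl^2) = (dl^2 * (W + 1) + 3 * X^2) + 3 * X^2 * W /\
  dl^2 * (W + 1) + 3 * X^2 = 3 * ((dl * f)^2 + X^2).
Proof. move=> h; split; first lia. rewrite -h; lia. Qed.

Lemma idB d f W X : 3*f^2 = W+1 -> (3 * d * f)^2 + X^2 = 3 * d^2 * W + (X^2 + 3 * d^2).
Proof. move=> h; have : (3 * d * f)^2 = 3 * d^2 * (3 * f^2) by lia. rewrite h; lia. Qed.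

Lemma MWA M e dl f W : M * (3*(e+dl)^2 + dl^2) + dl^2 = 3*dl^2*f^2 -> 3*f^2 = W+1 ->
  M * (3*(e+dl)^2 + dl^2) = dl^2 * W.
Proof. move=> H h; have : 3*dl^2*f^2 = dl^2 * (W + 1) by rewrite -h; lia. lia. Qed.

Lemma MWB M e d f W : M * (3*(e+3*d)^2 + (3*d)^2) + (3*d)^2 = 3*(3*d)^2*f^2 -> 3*f^2 = W+1 ->
  M * ((e+3*d)^2 + 3*d^2) = 3 * d^2 * W.
Proof. move=> H h; have : 3 * (3 * d)^2 * f^2 = 3 * (3 * d^2 * (W + 1)) by rewrite -h; lia. lia. Qed.

Lemma eq12 M e k f : M*(3*(e+6*k)^2 + (6*k)^2) + (6*k)^2 = 3*(6*k)^2*f^2 ->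
  M*((e+6*k)^2 + 12*k^2) + 12*k^2 = 36*k^2*f^2.
Proof. lia. Qed.

Lemma eq1 M1 u k f : 12*M1*u + 12*k^2 = 36*k^2*f^2 -> M1*u + k^2 = 3*k^2*f^2.
Proof. lia. Qed.

Theorem theorem1 (eta delta M f : nat) :
  1 < eta -> 1 < delta -> 1 < M -> 0 < f -> coprime eta delta ->
  (* (delta f)^2 - M (eta+delta)^2 = delta^2 (M+1)/3, multiplied by 3 *)
  3 * (delta * f) ^ 2 = 3 * (M * (eta + delta) ^ 2) + delta ^ 2 * (M + 1) ->
  consec_sq_square M ->
  [/\ odd eta,
      delta %% 6 \in [:: 0; 1; 5],
      (delta %% 6 = 0 -> M %% 12 = 0),
      (delta %% 6 \in [:: 1; 5] ->
         (odd f -> M %% 12 = 2) /\ (~~ odd f -> M %% 12 = 11)) &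
      ((* (a) *)
          [/\ delta %% 36 = 0, eta %% 6 \in [:: 1; 5] & M %% 144 = 0]
        \/ (* (b) *)
          [/\ delta %% 36 \in [:: 12; 24], eta %% 6 \in [:: 1; 5] & M %% 144 = 96]
        \/ (* (c) *)
          [/\ delta %% 36 \in [:: 6; 30], eta %% 6 \in [:: 1; 5], odd f & M %% 144 = 24]
        \/ (* (d) *)
          [/\ delta %% 36 = 18, eta %% 6 \in [:: 1; 5], odd f & M %% 144 = 72]
        \/ (* (e) *)
          [/\ delta %% 6 = 1,
              (f %% 6 \in [:: 1; 5] ->
                 (eta %% 6 \in [:: 1; 3] -> M %% 72 = 50) /\ (eta %% 6 = 5 -> M %% 72 = 2)),
              (f %% 6 = 3 ->
                 (eta %% 6 \in [:: 1; 3] -> M %% 72 = 2) /\ (eta %% 6 = 5 -> M %% 72 = 26)),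
              (f %% 6 = 0 ->
                 (eta %% 6 \in [:: 1; 3] -> M %% 36 = 11) /\ (eta %% 6 = 5 -> M %% 36 = 35)) &
              (f %% 6 \in [:: 2; 4] ->
                 (eta %% 6 \in [:: 1; 3] -> M %% 36 = 23) /\ (eta %% 6 = 5 -> M %% 36 = 11))]
        \/ (* (f) *)
          [/\ delta %% 6 = 5,
              (f %% 6 \in [:: 1; 5] ->
                 (eta %% 6 = 1 -> M %% 72 = 2) /\ (eta %% 6 \in [:: 3; 5] -> M %% 72 = 50)),
              (f %% 6 = 3 ->
                 (eta %% 6 = 1 -> M %% 72 = 26) /\ (eta %% 6 \in [:: 3; 5] -> M %% 72 = 2)),
              (f %% 6 = 0 ->
                 (eta %% 6 = 1 -> M %% 36 = 35) /\ (eta %% 6 \in [:: 3; 5] -> M %% 36 = 11)) &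
              (f %% 6 \in [:: 2; 4] ->
                 (eta %% 6 = 1 -> M %% 36 = 11) /\ (eta %% 6 \in [:: 3; 5] -> M %% 36 = 23))])].
Proof.
move=> he hd hM hf hco Hh Hc.
have H0 : M * (3*(eta+delta)^2 + delta^2) + delta^2 = 3*delta^2*f^2 by lia.
clear Hh.
have nc4 : M %% 8 <> 4 by apply: consec_not4.
have e2 : eta %% 2 = 1.
  case: (boolP (eta %% 2 == 0)) => [/eqP h|]; last lia.
  exfalso; apply: (to4a _ _ _ _ H0 h).
  case: (boolP (delta %% 2 == 0)) => [/eqP h'|]; last lia.
  exfalso; apply: (cop_no 2 eta delta) => //; by rewrite /dvdn; apply/eqP.
have [W hW] : exists W, 3 * f^2 = W + 1.
  exists (3 * f^2 - 1); have : 0 < f^2 by rewrite expn_gt0 hf. lia.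
have d2pos : 0 < delta^2 by rewrite expn_gt0; lia.
have : delta %% 6 = 0 \/ delta %% 6 = 1 \/ delta %% 6 = 5 \/ delta %% 6 = 3 \/
       (delta %% 6 = 2 \/ delta %% 6 = 4) by lia.
case=> [h0|[h1|[h5|[h3|h24]]]].
-
  have [k hk] : exists k, delta = 6 * k by exists (delta %/ 6); lia.
  have e3 : eta %% 3 != 0.
    apply/negP => /eqP e3; apply: (cop_no 3 eta delta) => //; rewrite /dvdn; apply/eqP; lia.
  subst delta.
  have H12 := eq12 _ _ _ _ H0.
  have M12 := to12 _ _ _ _ H12 e2 e3.
  have [M1 hM1] : exists M1, M = 12 * M1 by exists (M %/ 12); lia.
  subst M.
  have H1 := eq1 _ _ _ _ H12.
  have [A1 A2 A3] := to4c _ _ _ _ H1 e2.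
  have [B1 B2] := to9c _ _ _ _ H1 e3.
  clear H0 H12 H1 Hc.
  split; [by rewrite oddE e2 | by rewrite h0 | by move=> _; lia | by rewrite !inE h0 | ].
  have : k %% 6 = 0 \/ (k %% 2 = 0 /\ k %% 3 <> 0) \/ (k %% 2 = 1 /\ k %% 3 <> 0) \/
         (k %% 2 = 1 /\ k %% 3 = 0) by lia.
  case => [K|[K|[K|K]]].
  + left; split; rewrite ?inE; lia.
  + right; left; split; rewrite ?inE; lia.
  + case: (boolP (odd f)) => fo; last first.
      exfalso; move: fo; rewrite oddE => /eqP fo; lia.
    have f2 : f %% 2 = 1 by move: fo; rewrite oddE => /eqP.
    right; right; left; split => //; rewrite ?inE; lia.
  + case: (boolP (odd f)) => fo; last first.
      exfalso; move: fo; rewrite oddE => /eqP fo; lia.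
    have f2 : f %% 2 = 1 by move: fo; rewrite oddE => /eqP.
    right; right; right; left; split => //; rewrite ?inE; lia.
{
  have d2 : delta %% 2 = 1 by lia.
  have d3 : delta %% 3 != 0 by apply/eqP; lia.
  have [R8a R8b] := to8 _ _ _ _ H0 e2 d2.
  have R9 := to9 _ _ _ _ H0 d3; rewrite /g9 in R9.
  clear H0 Hc.
  move: R9; case: eqP => F3; case: eqP => E3 R9.
  all: split; [by rewrite oddE e2 | by rewrite !inE h1 | by move=> h; lia |
               move=> _; split; rewrite oddE => /eqP hf2; lia | ].
  all: right; right; right; right; left.
  all: split; [done | | | | ]; rewrite ?inE => hf6; split; rewrite ?inE => he6; lia. }
{
  have d2 : delta %% 2 = 1 by lia.
  have d3 : delta %% 3 != 0 by apply/eqP; lia.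
  have [R8a R8b] := to8 _ _ _ _ H0 e2 d2.
  have R9 := to9 _ _ _ _ H0 d3; rewrite /g9 in R9.
  clear H0 Hc.
  move: R9; case: eqP => F3; case: eqP => E3 R9.
  all: split; [by rewrite oddE e2 | by rewrite !inE h5 | by move=> h; lia |
               move=> _; split; rewrite oddE => /eqP hf2; lia | ].
  all: right; right; right; right; right.
  all: split; [done | | | | ]; rewrite ?inE => hf6; split; rewrite ?inE => he6; lia. }
-
  exfalso.
  have [d hdd] : exists d, delta = 3 * d by exists (delta %/ 3); lia.
  have d2 : d %% 2 = 1 by lia.
  have e3 : eta %% 3 != 0.
    apply/negP => /eqP e3; apply: (cop_no 3 eta delta) => //; rewrite /dvdn; apply/eqP; lia.
  subst delta.
  set X := eta + 3 * d.
  set u := X^2 + 3 * d^2.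
  have MW : M * u = 3 * d^2 * W by exact: MWB H0 hW.
  apply: (no_u u); first by rewrite /u; lia.
    by apply: to4B.
  move=> q pq qu.
  have q3 : q <> 3.
    move=> q3; subst q; move: qu; apply/negP; exact: to3B.
  have n3 : ~~ (q %| 3) by apply/negP => /(prime3 _ pq).
  have nqd : ~~ (q %| d).
    apply/negP => qd.
    have qd2 : q %| 3 * d^2 by rewrite dvdn_mull // Euclid_dvdX // qd.
    have : q %| X^2 by rewrite -(dvdn_addl _ qd2); exact: qu.
    rewrite Euclid_dvdX // andbT => qX.
    apply: (cop_no q eta (3 * d)) => //; last by rewrite dvdn_mull.
    by move: qX; rewrite /X dvdn_addl // dvdn_mull.
  have nqd2 : ~~ (q %| 3 * d^2) by rewrite Euclid_dvdM // Euclid_dvdX // (negbTE n3) (negbTE nqd).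
  have qW : q %| W.
    have : q %| 3 * d^2 * W by rewrite -MW dvdn_mull.
    by rewrite Euclid_dvdM // (negbTE nqd2).
  exists (3 * d * f), X; split.
    have id1 : (3 * d * f)^2 + X^2 = 3 * d^2 * W + u by exact: idB.
    by rewrite id1 dvdn_add // dvdn_mull.
  apply/negP => qX.
  have : q %| 3 * d^2.
    have h : q %| X^2 by rewrite Euclid_dvdX // qX.
    by rewrite -(dvdn_addr _ h); exact: qu.
  by rewrite (negbTE nqd2).
-
  exfalso.
  have d2 : delta %% 2 = 0 by lia.
  have d3 : delta %% 3 != 0 by apply/eqP; lia.
  set X := eta + delta.
  set D := 3 * X^2 + delta^2.
  have MW : M * D = delta^2 * W by exact: MWA H0 hW.
  apply: (no_u D); first by rewrite /D; lia.
    by apply: to4A.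
  move=> q pq qD.
  have q3 : q <> 3.
    move=> q3; subst q; move: qD; apply/negP; exact: to3A.
  have nqd : ~~ (q %| delta).
    apply/negP => qd.
    have qd2 : q %| delta^2 by rewrite Euclid_dvdX // qd.
    have : q %| 3 * X^2 by rewrite -(dvdn_addl _ qd2); exact: qD.
    rewrite Euclid_dvdM // Euclid_dvdX // andbT => /orP[/(prime3 _ pq)//|qX].
    apply: (cop_no q eta delta) => //.
    by move: qX; rewrite /X dvdn_addl.
  have nqd2 : ~~ (q %| delta^2) by rewrite Euclid_dvdX // negb_and nqd.
  have qW : q %| W.
    have : q %| delta^2 * W by rewrite -MW dvdn_mull.
    by rewrite Euclid_dvdM // (negbTE nqd2).
  exists (delta * f), X; split.
    have [id1 id2] := idA f W X delta hW.
    have h1 : q %| (delta^2 * (W + 1) + 3 * X^2) + 3 * X^2 * W by rewrite -id1 dvdn_mull.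
    have h2 : q %| delta^2 * (W + 1) + 3 * X^2 by rewrite -(dvdn_addl _ (dvdn_mull (3 * X^2) qW)).
    move: h2; rewrite id2 Euclid_dvdM // => /orP[/(prime3 _ pq)//|] //.
  apply/negP => qX.
  have : q %| delta^2.
    have : q %| 3 * X^2 by rewrite dvdn_mull // Euclid_dvdX // qX.
    by move=> h; rewrite -(dvdn_addr _ h).
  by rewrite (negbTE nqd2).
Qed.
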